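(* Let $N\ge 2$. Every isometry $T$ of $W_N$ (a bijection $T:W_N\to W_N$ with $\|T(\mathbf u)-T(\mathbf v)\|=\|\mathbf u-\mathbf v\|$ for all $\mathbf u,\mathbf v\in W_N$) satisfies $T(\mathbf 0)=\mathbf 0$, and consequently $T$ permutes the set of vertices $\{\mathbf v_1,\dots,\mathbf v_N\}$.
   Context: Let $N\ge 2$ be an integer and $\mathbb T=\{z\in\mathbb C:|z|=1\}$. For $\mathbf a=(a_1,\dots,a_{N-1})\in\mathbb R^{N-1}$ define $\mathbf c=(c_1,\dots,c_{N-1})\in\mathbb C^{N-1}$ by $c_j=\frac{\sqrt2}{2}(a_j+i\,a_{N-j})$ for $1\le j<N/2$, $c_{N/2}=a_{N/2}$ (only when $N$ is even), and $c_j=\frac{\sqrt2}{2}(a_{N-j}-i\,a_j)$ for $N/2<j\le N-1$ (so $c_{N-j}=\overline{c_j}$). Associate to $\mathbf a$ the monic polynomial $\mathbf a(x)=x^N+\sum_{n=1}^{N-1}c_nx^{N-n}+1$. Define $W_N=\{\mathbf a\in\mathbb R^{N-1}:\text{all roots of }\mathbf a(x)\text{ lie in }\mathbb T\}$, with the Euclidean metric; note $\mathbf 0\in W_N$ corresponds to $x^N+1$. Let $\zeta_N=e^{2\pi i/N}$. The vertices $\mathbf v_1,\dots,\mathbf v_N\in W_N$ are defined by $\mathbf v_n(x)=(x+\zeta_N^n)^N$, $1\le n\le N$. *)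

(* Defs.v *)
From HB Require Import structures.
From mathcomp Require Import all_boot all_order all_algebra.
From mathcomp Require Import reals trigo.
From mathcomp Require Import complex.

Set Implicit Arguments.
Unset Strict Implicit.
Unset Printing Implicit Defensive.

Import Order.TTheory GRing.Theory Num.Theory.
Local Open Scope ring_scope.

Section WN.
Variable R : realType.
Variable N : nat.

(* Points of R^(N-1): row vectors a = (a_1,...,a_(N-1)); a_j is stored
   at index j-1.  [acoord a j] is a_j for 1 <= j <= N-1 (and 0 otherwise). *)
Definition acoord (a : 'rV[R]_(N.-1)) (j : nat) : R :=
  if (1 <= j)%N then
    (if @insub _ (fun k => (k < N.-1)%N) 'I_(N.-1) j.-1 is Some k then a 0 k else 0)
  else 0.

Definition ccoef (a : 'rV[R]_(N.-1)) (j : nat) : R[i] :=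
  let s := Num.sqrt 2 / 2 in
  if (j.*2 < N)%N then Complex (s * acoord a j) (s * acoord a (N - j))
  else if (j.*2 == N)%N then Complex (acoord a j) 0
  else Complex (s * acoord a (N - j)) (- (s * acoord a j)).

Definition apoly (a : 'rV[R]_(N.-1)) : {poly R[i]} :=
  'X^N + \sum_(1 <= n < N) (ccoef a n)%:P * 'X^(N - n) + 1.

Definition WN (a : 'rV[R]_(N.-1)) : Prop :=
  forall z : R[i], root (apoly a) z -> `|z| = 1.

Definition edist (u v : 'rV[R]_(N.-1)) : R :=
  Num.sqrt (\sum_(j < N.-1) (u 0 j - v 0 j) ^+ 2).

Definition zetaN : R[i] :=
  Complex (cos (2 * pi / N%:R)) (sin (2 * pi / N%:R)).

Definition is_vertex (n : nat) (a : 'rV[R]_(N.-1)) : Prop :=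
  apoly a = ('X + (zetaN ^+ n)%:P) ^+ N.

End WN.

(* Main.v *)
Require Import Defs.
From HB Require Import structures.
From mathcomp Require Import all_boot all_order all_algebra.
From mathcomp Require Import reals trigo.
From mathcomp Require Import complex.
From mathcomp Require Import zify ring lra.
Import Order.TTheory GRing.Theory Num.Theory.
Local Open Scope ring_scope.

Section Proof.
Variable R : realType.
Variable N : nat.
Hypothesis hN : (2 <= N)%N.
Local Notation vec := 'rV[R]_(N.-1).
Local Notation C := R[i].

Lemma sum_delta (F : nat -> C) k m n : (m <= k < n)%N ->
  \sum_(m <= j < n) (if j == k then F j else 0) = F k.
Proof.
move=> /andP[mk kn].
rewrite (@big_cat_nat _ _ _ k m n _ _ mk (ltnW kn)) /= (@big_ltn _ _ _ k n) // eqxx.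
rewrite big1_seq ?add0r; last first.
  by move=> j /andP[_]; rewrite mem_index_iota => /andP[_ jk]; rewrite ifN // neq_ltn jk.
rewrite big1_seq ?addr0 // => j /andP[_]; rewrite mem_index_iota => /andP[kj _].
by rewrite ifN // neq_ltn kj orbT.
Qed.

Lemma coef_apoly (a : vec) i : (apoly a)`_i =
  if i == N then 1 else if i == 0%N then 1
  else if (i < N)%N then ccoef a (N - i) else 0.
Proof.
rewrite /apoly coefD coefD coefXn coef1 coef_sum.
have -> : \sum_(1 <= n < N) ((ccoef a n)%:P * 'X^(N - n))`_i =
   \sum_(1 <= n < N) (if n == (N - i)%N then
       (if (0 < i < N)%N then ccoef a n else 0) else 0).
  rewrite big_nat [RHS]big_nat; apply: eq_bigr => n /andP[n1 nN].
  rewrite coefCM coefXn.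
  have -> : (i == N - n)%N = (n == N - i)%N && (0 < i < N)%N.
    apply/idP/idP; [move=> /eqP H; apply/andP; split; [apply/eqP|]; lia|].
    move=> /andP[/eqP H1 H2]; apply/eqP; lia.
  by case: (n == N - i)%N; case: (0 < i < N)%N; rewrite ?mulr1 ?mulr0.
have [i0N|i0N] := boolP (0 < i < N)%N.
  rewrite (sum_delta (fun n => ccoef a n)); last by move: i0N => /andP[]; lia.
  have -> : (i == N) = false by lia.
  have -> : (i == 0%N) = false by lia.
  have -> : (i < N)%N by lia.
  by rewrite add0r addr0.
rewrite big1 ?addr0; last by move=> n _; case: ifP.
have [/eqP iN|iN] := boolP (i == N).
  rewrite iN; have -> : (N == 0%N) = false by lia.
  by rewrite /= addr0.
have [/eqP i0|i0] := boolP (i == 0%N); first by rewrite /= add0r.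
have -> : (i < N)%N = false by move: i0N iN i0; lia.
by rewrite addr0.
Qed.

Definition nrm2 (a : vec) : R := \sum_(j < N.-1) a 0 j ^+ 2.
Definition cn2 (z : C) : R := complex.Re z ^+ 2 + complex.Im z ^+ 2.

Lemma acoordS (a : vec) j (hj : (j < N.-1)%N) : acoord a j.+1 = a 0 (Ordinal hj).
Proof.
rewrite /acoord /=; case: insubP => [k _ /= hk|]; last by rewrite hj.
by congr (a 0 _); apply: val_inj.
Qed.

Lemma nrm2_acoord (a : vec) : nrm2 a = \sum_(1 <= j < N) acoord a j ^+ 2.
Proof.
rewrite big_add1 big_mkord /nrm2; apply: eq_bigr => j _.
by rewrite (acoordS a _ (ltn_ord j)); congr (a 0 _ ^+ 2); exact: val_inj.
Qed.

Lemma sqrt2half : (Num.sqrt 2 / 2) ^+ 2 = 1 / 2 :> R.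
Proof. by rewrite expr_div_n sqr_sqrtr ?ler0n //; field. Qed.

Lemma cn2_ccoef (a : vec) k : (1 <= k < N)%N ->
  cn2 (ccoef a k) = (acoord a k ^+ 2 + acoord a (N - k) ^+ 2) / 2.
Proof.
move=> hk; rewrite /ccoef /cn2.
case: ifP => h1 /=.
  by rewrite !exprMn sqr_sqrtr ?ler0n //; field.
case: ifP => h2 /=.
  have -> : (N - k = k)%N by move: h2 => /eqP; lia.
  by rewrite expr0n /= addr0; field.
by rewrite sqrrN !exprMn sqr_sqrtr ?ler0n //; field.
Qed.

Lemma nrm2_ccoef (a : vec) : nrm2 a = \sum_(1 <= k < N) cn2 (ccoef a k).
Proof.
rewrite nrm2_acoord (eq_big_nat _ _ (cn2_ccoef a)) -mulr_suml big_split /=.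
have -> : \sum_(1 <= i < N) acoord a (N - i) ^+ 2 = \sum_(1 <= i < N) acoord a i ^+ 2.
  by rewrite big_nat_rev; apply: eq_big_nat => k hk; congr (acoord a _ ^+ 2); lia.
by field.
Qed.

Lemma prod_coef_bound (r : seq C) : (forall z, z \in r -> `|z| = 1) ->
  forall i, `|(\prod_(z <- r) ('X - z%:P))`_i| <= ('C(size r, i))%:R.
Proof.
elim: r => [|z r IH] hr i.
  by rewrite big_nil coef1; case: i => [|i] /=; rewrite ?normr1 ?normr0 ?bin0.
have hz : `|z| = 1 by apply: hr; rewrite mem_head.
have IH' : forall i, `|(\prod_(z <- r) ('X - z%:P))`_i| <= ('C(size r, i))%:R.
  by apply: IH => w hw; apply: hr; rewrite inE hw orbT.
rewrite big_cons mulrBl coefB coefXM coefCM /=.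
case: i => [|i] /=.
  by rewrite sub0r normrN normrM hz mul1r bin0; apply: (le_trans (IH' 0%N)); rewrite bin0.
rewrite binS natrD (le_trans (ler_normB _ _)) // normrM hz mul1r addrC.
by rewrite lerD.
Qed.

Lemma size_apoly (a : vec) : size (apoly a) = N.+1.
Proof.
apply/eqP; rewrite eqn_leq; apply/andP; split.
  apply/leq_sizeP => j hj; rewrite coef_apoly.
  have -> : (j == N) = false by lia.
  have -> : (j == 0%N) = false by lia.
  by have -> : (j < N)%N = false by lia.
rewrite ltnNge; apply/negP => /leq_sizeP /(_ N (leqnn N)).
by rewrite coef_apoly eqxx; apply/eqP; exact: oner_neq0.
Qed.

Lemma lead_apoly (a : vec) : lead_coef (apoly a) = 1.
Proof. by rewrite lead_coefE size_apoly /= coef_apoly eqxx. Qed.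

Lemma apoly_factor (a : vec) :
  {r : seq C | apoly a = \prod_(z <- r) ('X - z%:P) & size r = N}.
Proof.
have [r hr] := closed_field_poly_normal (apoly a).
rewrite lead_apoly scale1r in hr.
exists r => //.
have := size_apoly a; rewrite hr size_prod_XsubC; by case.
Qed.

Lemma ccoef_coef (a : vec) k : (1 <= k < N)%N -> ccoef a k = (apoly a)`_(N - k).
Proof.
move=> hk; rewrite coef_apoly.
have -> : (N - k == N)%N = false by lia.
have -> : (N - k == 0)%N = false by lia.
have -> : (N - k < N)%N by lia.
by rewrite subKn //; lia.
Qed.

Lemma cn2E (z : C) : ((cn2 z)%:C)%C = `|z| ^+ 2.
Proof. by rewrite /cn2 add_Re2_Im2. Qed.

Lemma WN_roots (a : vec) r : WN a -> apoly a = \prod_(z <- r) ('X - z%:P) ->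
  forall z, z \in r -> `|z| = 1.
Proof. by move=> hW hr z hz; apply: hW; rewrite hr root_prod_XsubC. Qed.

Lemma WN_bound (a : vec) : WN a -> forall k, (1 <= k < N)%N ->
  `|ccoef a k| <= ('C(N, k))%:R.
Proof.
move=> hW k hk; have [r hr sr] := apoly_factor a.
rewrite ccoef_coef // hr -(bin_sub (ltnW (proj2 (andP hk)))).
by have := @prod_coef_bound r (@WN_roots a r hW hr) (N - k); rewrite sr.
Qed.

Lemma WN_bound2 (a : vec) : WN a -> forall k, (1 <= k < N)%N ->
  cn2 (ccoef a k) <= ('C(N, k))%:R ^+ 2.
Proof.
move=> hW k hk; rewrite -lecR cn2E rmorphXn /= rmorph_nat.
by rewrite !expr2 ler_pM ?normr_ge0 ?WN_bound.
Qed.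

Definition B : R := \sum_(1 <= k < N) ('C(N, k))%:R ^+ 2.

Lemma WN_max (a : vec) : WN a -> nrm2 a <= B.
Proof.
move=> hW; rewrite nrm2_ccoef /B big_nat [X in _ <= X]big_nat.
by apply: ler_sum => k hk; apply: WN_bound2.
Qed.

Lemma WN_eq (a : vec) : WN a -> nrm2 a = B ->
  exists t, apoly a = ('X - t%:P) ^+ N.
Proof.
move=> hW; rewrite nrm2_ccoef /B big_ltn; last by lia.
rewrite [X in _ = X]big_ltn; last by lia.
have h1 : cn2 (ccoef a 1) <= ('C(N, 1))%:R ^+ 2 by apply: (WN_bound2 _ hW); lia.
have h2 : \sum_(2 <= k < N) cn2 (ccoef a k) <= \sum_(2 <= k < N) ('C(N, k))%:R ^+ 2.
  by rewrite big_nat [X in _ <= X]big_nat; apply: ler_sum => k hk; apply: (WN_bound2 _ hW); lia.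
move=> heq.
have e1 : cn2 (ccoef a 1) = ('C(N, 1))%:R ^+ 2 by lra.
have n1 : `|ccoef a 1| = N%:R.
  apply/eqP; rewrite -(@eqrXn2 _ 2) ?normr_ge0 ?ler0n //.
  by rewrite -cn2E e1 bin1 rmorphXn /= rmorph_nat.
have [r hr sr] := apoly_factor a.
have hr1 := @WN_roots a r hW hr.
move: n1; rewrite ccoef_coef; last by lia.
rewrite hr -sr subn1 coefPn_prod_XsubC; last by rewrite sr; lia.
rewrite normrN (big_nth 0) big_mkord => hs.
have hs' : `|\sum_(i < size r) r`_i| = \sum_(i < size r) `|r`_i|.
  rewrite hs (eq_bigr (fun _ => 1)); last by move=> i _; apply: hr1; rewrite mem_nth.
  by rewrite sumr_const card_ord.
have [t _ ht] := normC_sum_eq1 hs' (fun i _ => hr1 _ (mem_nth 0 (ltn_ord i))).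
exists t; rewrite (big_nth 0) big_mkord (eq_bigr (fun _ => 'X - t%:P)).
  by rewrite prodr_const card_ord sr.
by move=> i _; rewrite ht.
Qed.

Local Notation zeta := (@zetaN R N).
Definition th : R := 2 * pi / N%:R.

Lemma zetaX k : zeta ^+ k = Complex (cos (k%:R * th)) (sin (k%:R * th)).
Proof.
elim: k => [|k IH].
  by rewrite expr0 mul0r cos0 sin0.
rewrite exprS IH /zetaN -/th /=.
apply/eqP; rewrite eq_complex /= -!natr1 !mulrDl !mul1r cosD sinD.
apply/andP; split; apply/eqP; ring.
Qed.

Lemma zeta_norm : `|zeta| = 1.
Proof. by rewrite normc_def /zetaN /= cos2Dsin2 sqrtr1. Qed.

Lemma zetaXN : zeta ^+ N = 1.
Proof.
have hN0 : (N%:R : R) != 0 by rewrite pnatr_eq0; lia.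
rewrite zetaX (_ : N%:R * th = pi *+ 2).
  by rewrite cos2pi sin2pi.
by rewrite /th mulrC mulrAC -mulrA divff // mulr1 mulr_natl.
Qed.

Lemma zetaX_neq1 k : (0 < k < N)%N -> zeta ^+ k != 1.
Proof.
move=> hk; rewrite zetaX; apply/negP => /eqP [] hc _.
set x := k%:R * th in hc.
have hx : x = (x / 2) *+ 2 by rewrite -mulr_natr mulfVK ?pnatr_eq0.
have hN0 : (0 : R) < N%:R by rewrite ltr0n; lia.
have hk0 : (0 : R) < k%:R by rewrite ltr0n; lia.
have hkN : (k%:R : R) < N%:R by rewrite ltr_nat; lia.
have hpi := @pi_gt0 R.
have hx2 : x / 2 = pi * (k%:R / N%:R) by rewrite /x /th; field; rewrite lt0r_neq0.
have q1 : k%:R / N%:R < (1 : R) by rewrite ltr_pdivrMr // mul1r.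
have q0 : 0 < k%:R / N%:R :> R by rewrite divr_gt0.
have hs : 0 < sin (x / 2).
  apply: sin_gt0_pi; rewrite hx2; apply/andP; split; [exact: mulr_gt0|nra].
move: hc; rewrite hx cos_mulr2n => hc.
have : cos (x / 2) ^+ 2 = 1 by lra.
move: (sin2cos2 (x / 2)) => hsc hc2.
have : sin (x / 2) ^+ 2 = 0 by rewrite hsc hc2 subrr.
by move/eqP; rewrite sqrf_eq0 => /eqP h; move: hs; rewrite h ltxx.
Qed.

Lemma zeta_prim : N.-primitive_root zeta.
Proof.
have [m pm mdN] := prim_order_exists (ltnW hN) zetaXN.
have mle : (m <= N)%N by apply: dvdn_leq => //; lia.
have m0 := prim_order_gt0 pm.
have [mlt|mge] := ltnP m N.
  have := @zetaX_neq1 m; rewrite m0 mlt => /(_ isT).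
  by rewrite (prim_expr_order pm) eqxx.
have mN : m = N by apply/eqP; rewrite eqn_leq mge mle.
by move: pm; rewrite mN.
Qed.

Lemma coefXaddC n (c : C) j : (('X + c%:P) ^+ n)`_j = c ^+ (n - j) *+ 'C(n, j).
Proof.
elim: n j => [|n IH] j.
  by rewrite expr0 coef1; case: j => [|j] //=; rewrite expr0.
rewrite exprS mulrDl coefD coefXM coefCM.
case: j => [|j] /=.
  by rewrite IH !bin0 subn0 !mulr1n exprS add0r.
rewrite !IH binS mulrnDr subSS addrC; congr (_ + _).
have [jn|jn] := ltnP j n.
  by rewrite mulrnAr -exprS subnSK.
by rewrite bin_small ?mulr0n ?mulr0 ?ltnS.
Qed.

Lemma vertex_of_eq (a : vec) t : apoly a = ('X - t%:P) ^+ N ->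
  exists2 m, (1 <= m <= N)%N & is_vertex m a.
Proof.
move=> ha.
have h0 : (- t) ^+ N = 1.
  have := coef_apoly a 0; rewrite ha -horner_coef0 horner_exp !hornerE /=.
  by rewrite (_ : (0 == N) = false) //; lia.
have [i hi] := prim_rootP zeta_prim h0.
exists (if i == 0%N :> nat then N else i).
  by move: (ltn_ord i); case: eqP; lia.
rewrite /is_vertex ha (_ : zeta ^+ (if i == 0%N :> nat then N else i) = - t).
  by rewrite polyCN.
by case: ifP => [/eqP hi0|_]; rewrite hi // ?hi0 zetaXN expr0.
Qed.

Lemma vertex_WN m (a : vec) : is_vertex m a -> WN a.
Proof.
move=> hv z; rewrite hv /root horner_exp !hornerE expf_eq0 => /andP[_ /eqP hz].
have -> : z = - zeta ^+ m by apply/eqP; rewrite -addr_eq0 hz.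
by rewrite normrN normrX zeta_norm expr1n.
Qed.

Lemma vertex_nrm2 m (a : vec) : is_vertex m a -> nrm2 a = B.
Proof.
move=> hv; rewrite nrm2_ccoef /B; apply: eq_big_nat => k hk.
apply: (@complexI R); rewrite cn2E ccoef_coef // hv coefXaddC.
rewrite subKn; last by lia.
rewrite bin_sub; last by lia.
by rewrite normrMn normrX normrX zeta_norm !expr1n rmorphXn /= rmorph_nat.
Qed.

Definition gent (p : {poly C}) (j : nat) : R :=
  if (j.*2 < N)%N then Num.sqrt 2 * complex.Re p`_(N - j)
  else if (j.*2 == N)%N then complex.Re p`_(N - j)
  else Num.sqrt 2 * complex.Im p`_j.

Definition mkv (p : {poly C}) : vec := \row_(k < N.-1) gent p k.+1.

Lemma acoord_mkv (p : {poly C}) j : (1 <= j < N)%N -> acoord (mkv p) j = gent p j.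
Proof.
move=> hj; have hj' : (j.-1 < N.-1)%N by lia.
have := acoordS (mkv p) _ hj'; rewrite prednK; last by lia.
by move=> ->; rewrite mxE prednK //; lia.
Qed.

Lemma Re_conjc (z : C) : complex.Re (conjc z) = complex.Re z.
Proof. by case: z. Qed.
Lemma Im_conjc (z : C) : complex.Im (conjc z) = - complex.Im z.
Proof. by case: z. Qed.

Lemma sqrt2K : Num.sqrt 2 / 2 * Num.sqrt 2 = 1 :> R.
Proof. by rewrite mulrAC -expr2 sqr_sqrtr ?ler0n // divff // pnatr_eq0. Qed.

Lemma ccoef_mkv (p : {poly C}) k : (1 <= k < N)%N ->
  (forall j, (0 < j < N)%N -> p`_j = conjc (p`_(N - j))) ->
  ccoef (mkv p) k = p`_(N - k).
Proof.
move=> hk hsym; rewrite /ccoef.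
case: ifP => h1.
  rewrite !acoord_mkv; try lia.
  rewrite /gent h1.
  have -> : ((N - k).*2 < N)%N = false by lia.
  have -> : ((N - k).*2 == N)%N = false by lia.
  rewrite !mulrA sqrt2K !mul1r.
  by case: (p`_(N - k)).
case: ifP => h2.
  rewrite acoord_mkv // /gent h1 h2.
  have hI : complex.Im p`_(N - k) = 0.
    have e : (N - k = k)%N by move: h2 => /eqP; lia.
    have := hsym k hk; rewrite e => /(congr1 (@complex.Im R)); rewrite Im_conjc.
    by move=> h; lra.
  by move: hI; case: (p`_(N - k)) => x y /= ->.
rewrite !acoord_mkv; try lia.
rewrite /gent h1 h2.
have -> : ((N - k).*2 < N)%N by lia.
rewrite subKn; last by lia.
rewrite (hsym k) // Re_conjc Im_conjc !mulrA sqrt2K !mul1r opprK.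
by case: (p`_(N - k)).
Qed.

Definition P (m : nat) : {poly C} := ('X + (zeta ^+ m)%:P) ^+ N.

Lemma zetamN m : (zeta ^+ m) ^+ N = 1.
Proof. by rewrite exprAC zetaXN expr1n. Qed.

Lemma zetam_norm m : `|zeta ^+ m| = 1.
Proof. by rewrite normrX zeta_norm expr1n. Qed.

Lemma P_sym m j : (0 < j < N)%N -> (P m)`_j = conjc ((P m)`_(N - j)).
Proof.
move=> hj; rewrite /P !coefXaddC subKn; last by lia.
rewrite bin_sub; last by lia.
rewrite rmorphMn rmorphXn /=; congr (_ *+ _).
set w := zeta ^+ m.
have hw : conjc w = w^-1 by rewrite invc_norm zetam_norm expr1n invr1 mul1r.
have w0 : w != 0 by rewrite -normr_eq0 zetam_norm oner_neq0.
rewrite hw exprVn; apply: (mulIf (expf_neq0 j w0)).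
rewrite -exprD subnK; last by lia.
by rewrite /w zetamN mulVf // expf_neq0.
Qed.

Lemma apoly_mkv m : apoly (mkv (P m)) = P m.
Proof.
apply/polyP => i; rewrite coef_apoly.
case: eqP => [->|iN].
  by rewrite /P coefXaddC subnn binn expr0.
case: eqP => [->|i0].
  by rewrite /P coefXaddC subn0 bin0 zetamN.
case: ifP => hi.
  rewrite ccoef_mkv; [|lia|by move=> j hj; apply: P_sym].
  by rewrite subKn //; lia.
by rewrite /P coefXaddC bin_small //; lia.
Qed.

Lemma vertex_mkv m : is_vertex m (mkv (P m)).
Proof. exact: apoly_mkv. Qed.

Lemma geom (w : C) n : (w - 1) * \sum_(1 <= m < n.+1) w ^+ m = w ^+ n.+1 - w.
Proof.
elim: n => [|n IH]; first by rewrite big_geq // mulr0 expr1 subrr.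
rewrite big_nat_recr //= mulrDr IH !exprS; ring.
Qed.

Lemma sumP0 j : (0 < j < N)%N -> \sum_(1 <= m < N.+1) (P m)`_j = 0.
Proof.
move=> hj.
under eq_bigr do rewrite /P coefXaddC exprAC.
rewrite sumrMnl.
set w := zeta ^+ (N - j).
have w1 : w - 1 != 0 by rewrite subr_eq0 zetaX_neq1 //; lia.
suff -> : \sum_(1 <= i < N.+1) w ^+ i = 0 by rewrite mul0rn.
have := geom w N; rewrite exprS /w zetamN mulr1 subrr => /eqP.
by rewrite mulf_eq0 (negbTE w1) => /eqP.
Qed.

Lemma Re_sum (I : Type) (r : seq I) (F : I -> C) :
  complex.Re (\sum_(i <- r) F i) = \sum_(i <- r) complex.Re (F i).
Proof.
apply: (big_morph (@complex.Re R)) => //.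
by move=> [x1 y1] [x2 y2].
Qed.

Lemma Im_sum (I : Type) (r : seq I) (F : I -> C) :
  complex.Im (\sum_(i <- r) F i) = \sum_(i <- r) complex.Im (F i).
Proof.
apply: (big_morph (@complex.Im R)) => //.
by move=> [x1 y1] [x2 y2].
Qed.

Lemma sum_vertices : \sum_(1 <= m < N.+1) mkv (P m) = 0.
Proof.
apply/rowP => k; rewrite summxE mxE.
have hk := ltn_ord k.
rewrite (eq_bigr (fun m => gent (P m) k.+1)); last by move=> m _; rewrite mxE.
rewrite /gent; case h1 : (k.+1.*2 < N)%N; [|case h2 : (k.+1.*2 == N)%N].
- by rewrite -mulr_sumr -Re_sum sumP0 ?mulr0 //; lia.
- by rewrite -Re_sum sumP0 //; lia.
- by rewrite -mulr_sumr -Im_sum sumP0 ?mulr0 //; lia.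
Qed.

Lemma acoord0 j : acoord (0 : vec) j = 0.
Proof. by rewrite /acoord; case: ifP => // _; case: insub => // k; rewrite mxE. Qed.

Lemma WN0 : WN (0 : vec).
Proof.
have e : apoly (0 : vec) = 'X^N + 1.
  rewrite /apoly big1 ?addr0 // => n _.
  have -> : ccoef (0 : vec) n = 0.
    by rewrite /ccoef !acoord0 !mulr0 oppr0; case: ifP => //; case: ifP.
  by rewrite polyC0 mul0r.
move=> z; rewrite e /root !hornerE => /eqP hz.
have : `|z| ^+ N = 1.
  by rewrite -normrX (_ : z ^+ N = -1) ?normrN ?normr1 //; apply/eqP; rewrite -addr_eq0 hz.
by move/eqP; rewrite pexpr_eq1 ?normr_ge0 //; [move/eqP | lia].
Qed.

Lemma nrm2_ge0 (a : vec) : 0 <= nrm2 a.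
Proof. by apply: sumr_ge0 => j _; apply: sqr_ge0. Qed.

Lemma edistE (u v : vec) : edist u v = Num.sqrt (nrm2 (u - v)).
Proof. by rewrite /edist /nrm2; congr Num.sqrt; apply: eq_bigr => j _; rewrite !mxE. Qed.

Lemma nrm2_eq0 (a : vec) : nrm2 a <= 0 -> a = 0.
Proof.
move=> h; have h0 : nrm2 a = 0 by apply/eqP; rewrite eq_le h nrm2_ge0.
apply/rowP => j; rewrite mxE.
move: h0; rewrite /nrm2 => /(psumr_eq0P (fun j _ => sqr_ge0 (a 0 j))) H; have := H j isT.
by move/eqP; rewrite sqrf_eq0 => /eqP.
Qed.

Lemma nrm2_sub_expand (u p : vec) :
  nrm2 (u - p) = nrm2 u - 2 * \sum_(j < N.-1) u 0 j * p 0 j + nrm2 p.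
Proof.
rewrite /nrm2 mulr_sumr -sumrB -big_split /=; apply: eq_bigr => j _.
rewrite !mxE; ring.
Qed.

Lemma main_sec (T : vec -> vec)
    (hTW : forall u, WN u -> WN (T u))
    (hTsurj : forall w, WN w -> exists2 u, WN u & T u = w)
    (hTiso : forall u v, WN u -> WN v -> edist (T u) (T v) = edist u v) :
  T 0 = 0 /\
  (forall n a, (1 <= n <= N)%N -> is_vertex n a ->
     exists2 m, (1 <= m <= N)%N & is_vertex m (T a)) /\
  (forall m b, (1 <= m <= N)%N -> is_vertex m b ->
     exists n, exists2 a, (1 <= n <= N)%N /\ is_vertex n a & T a = b).
Proof.
have iso : forall u v, WN u -> WN v -> nrm2 (T u - T v) = nrm2 (u - v).
  move=> u v hu hv; have := hTiso u v hu hv; rewrite !edistE => /(congr1 (fun x => x ^+ 2)).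
  by rewrite !sqr_sqrtr ?nrm2_ge0.
have hW0 := WN0.
have H1 : forall w, WN w -> nrm2 (w - T 0) <= B.
  move=> w hw; have [u hu <-] := hTsurj w hw.
  by rewrite iso // subr0; apply: WN_max.
have hT0 : T 0 = 0.
  set p := T 0.
  pose V m := mkv (P m).
  have hle : \sum_(1 <= m < N.+1) nrm2 (V m - p) <= B *+ N.
    have eB : \sum_(1 <= m < N.+1) B = B *+ N by rewrite sumr_const_nat subSS subn0.
    rewrite -eB big_nat [X in _ <= X]big_nat.
    apply: ler_sum => m _; apply: H1; exact: (@vertex_WN m _ (vertex_mkv m)).
  have hsum : \sum_(1 <= m < N.+1) nrm2 (V m - p) = B *+ N + nrm2 p *+ N.
    under eq_bigr do rewrite nrm2_sub_expand.
    rewrite big_split big_split /= sumr_const_nat subSS subn0.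
    have -> : \sum_(1 <= i < N.+1) nrm2 (V i) = B *+ N.
      have eB : \sum_(1 <= m < N.+1) B = B *+ N by rewrite sumr_const_nat subSS subn0.
      rewrite -eB; by apply: eq_big_nat => m _; apply: (@vertex_nrm2 _ _ (vertex_mkv m)).
    rewrite sumrN -mulr_sumr exchange_big /=.
    rewrite (eq_bigr (fun _ => 0)) ?big1 ?mulr0 ?oppr0 ?addr0 //.
    move=> j _; rewrite -mulr_suml.
    have := congr1 (fun M : vec => M 0 j) sum_vertices; rewrite summxE mxE /= => ->.
    by rewrite mul0r.
  rewrite hsum -lerBrDl subrr in hle.
  apply: nrm2_eq0.
  have hN0 : (0 : R) < N%:R by rewrite ltr0n; lia.
  by move: hle; rewrite -mulr_natr => hle; nra.
split => //; split.
  move=> n a hn hv.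
  have ha := @vertex_WN _ _ hv.
  have [t ht] : exists t, apoly (T a) = ('X - t%:P) ^+ N.
    apply: WN_eq; first exact: hTW.
    by rewrite -(subr0 (T a)) -hT0 iso // subr0; apply: (@vertex_nrm2 _ _ hv).
  exact: @vertex_of_eq _ _ ht.
move=> m b hm hv.
have hb := @vertex_WN _ _ hv.
have [u hu hub] := hTsurj b hb.
have [t ht] : exists t, apoly u = ('X - t%:P) ^+ N.
  apply: WN_eq => //.
  by rewrite -(subr0 u) -iso // hT0 subr0 hub; apply: (@vertex_nrm2 _ _ hv).
have [n hn hvn] := @vertex_of_eq _ _ ht.
by exists n, u.
Qed.
End Proof.

Theorem mainTheorem11 (R : realType) (N : nat) (hN : (2 <= N)%N)
    (T : 'rV[R]_(N.-1) -> 'rV[R]_(N.-1))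
    (hTW : forall u, WN u -> WN (T u))
    (hTsurj : forall w, WN w -> exists2 u, WN u & T u = w)
    (hTinj : forall u v, WN u -> WN v -> T u = T v -> u = v)
    (hTiso : forall u v, WN u -> WN v -> edist (T u) (T v) = edist u v) :
  T 0 = 0 /\
  (forall n a, (1 <= n <= N)%N -> is_vertex n a ->
     exists2 m, (1 <= m <= N)%N & is_vertex m (T a)) /\
  (forall m b, (1 <= m <= N)%N -> is_vertex m b ->
     exists n, exists2 a, (1 <= n <= N)%N /\ is_vertex n a & T a = b).
Proof.
exact: (@main_sec R N hN T hTW hTsurj hTiso).
Qed.
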